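(* Let $n \ge 1$ be an integer, let $SV_n = \{C_{1,j} : 1 \le j \le n\}$ (the vertical straight polyomino $R_{1,n}$) and $SH_n = \{C_{i,1} : 1 \le i \le n\}$ (the horizontal straight polyomino $R_{n,1}$), and consider packings on the $n \times n$ board. Then $$\mathrm{cp}_{\mathrm{free}}(SV_n) = \mathrm{cp}_{\mathrm{free}}(SH_n) = \mathrm{cp}_{\mathrm{fixed}}(SV_n) = \mathrm{cp}_{\mathrm{fixed}}(SH_n) = n.$$
   Context: For integers $i,j$, $C_{i,j}$ denotes the unit square cell in column $i$ and row $j$ of the integer grid (columns numbered left to right, rows numbered top to bottom). A polyomino is a finite set of cells; its size is its number of cells. For a polyomino $\mathcal{P}$ of size $n$ the board is $\mathbb{B} = \{C_{i,j} : 1 \le i,j \le n\}$. The shift of $\mathcal{P}$ by integers $(c,d)$ is $\mathcal{P}+(c,d) = \{C_{x+c,y+d} : C_{x,y} \in \mathcal{P}\}$. A set of polyominoes is a valid arrangement if each of them is contained in $\mathbb{B}$ and they are pairwise disjoint (as sets of cells). A fixed copy of $\mathcal{P}$ is any shift of $\mathcal{P}$; a free copy is any shift of any rotation of $\mathcal{P}$ by a multiple of $90^\circ$ (for $SV_n$ and $SH_n$ the free copies are exactly the shifts of $SV_n$ and of $SH_n$). A fixed (resp. free) packing of $\mathcal{P}$ is a set of fixed (resp. free) copies of $\mathcal{P}$ forming a valid arrangement such that adding any further fixed (resp. free) copy of $\mathcal{P}$ yields an invalid arrangement. The clumsy fixed packing number $\mathrm{cp}_{\mathrm{fixed}}(\mathcal{P})$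 (resp. clumsy free packing number $\mathrm{cp}_{\mathrm{free}}(\mathcal{P})$) is the minimum number of polyominoes in a fixed (resp. free) packing of $\mathcal{P}$ on the $n\times n$ board. *)

(* Defs.v *)
From Stdlib Require Import ZArith List Arith Lia.
Import ListNotations.
Open Scope Z_scope.

(* C_{i,j} is represented by (i, j) : column i, row j. *)
Definition cell : Type := (Z * Z)%type.

Definition cell_eq_dec : forall a b : cell, {a = b} + {a <> b}.
Proof. decide equality; apply Z.eq_dec. Defined.

(* A polyomino is a finite set of cells, represented by a list (membership = In). *)
Definition polyomino : Type := list cell.

Definition psize (P : polyomino) : nat := length (nodup cell_eq_dec P).

Definition SV (n : nat) : polyomino := map (fun j => (1, Z.of_nat j)) (seq 1 n).
Definition SH (n : nat) : polyomino := map (fun i => (Z.of_nat i, 1)) (seq 1 n).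

Definition in_board (N : nat) (c : cell) : Prop :=
  1 <= fst c <= Z.of_nat N /\ 1 <= snd c <= Z.of_nat N.
Definition contained (N : nat) (P : polyomino) : Prop :=
  forall c, In c P -> in_board N c.

Definition shift (P : polyomino) (c d : Z) : polyomino :=
  map (fun x => (fst x + c, snd x + d)) P.

Definition rot90 (P : polyomino) : polyomino :=
  map (fun x => (- snd x, fst x)) P.

Definition fixed_copy (P Q : polyomino) : Prop :=
  exists c d, Q = shift P c d.
Definition free_copy (P Q : polyomino) : Prop :=
  exists k : nat, (k < 4)%nat /\ fixed_copy (Nat.iter k rot90 P) Q.

Definition disjoint (A B : polyomino) : Prop := forall c, In c A -> ~ In c B.
Definition same_set (A B : polyomino) : Prop := forall c, In c A <-> In c B.

Definition valid (N : nat) (L : list polyomino) : Prop :=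
  Forall (contained N) L /\ ForallOrdPairs disjoint L.

(* packing w.r.t. a notion of copy: valid, and adding any further copy
   (not already a member of the arrangement) gives an invalid arrangement *)
Definition packing (copy : polyomino -> polyomino -> Prop) (P : polyomino)
    (L : list polyomino) : Prop :=
  Forall (copy P) L /\ valid (psize P) L /\
  forall Q, copy P Q -> (forall R, In R L -> ~ same_set Q R) ->
    ~ valid (psize P) (Q :: L).

Definition fixed_packing := packing fixed_copy.
Definition free_packing := packing free_copy.

Definition is_min (S : nat -> Prop) (m : nat) : Prop :=
  S m /\ forall k, S k -> (m <= k)%nat.

Definition cp_fixed_is (P : polyomino) (m : nat) : Prop :=
  is_min (fun k => exists L, fixed_packing P L /\ length L = k) m.
Definition cp_free_is (P : polyomino) (m : nat) : Prop :=
  is_min (fun k => exists L, free_packing P L /\ length L = k) m.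

(* Main.v *)
Require Import Defs.
From Stdlib Require Import ZArith List Arith.
From Stdlib Require Import Lia Classical FinFun.
Import ListNotations.
Open Scope Z_scope.

Lemma in_shift P u v c : In c (Defs.shift P u v) <-> In (fst c - u, snd c - v) P.
Proof.
  unfold Defs.shift; rewrite in_map_iff; split.
  - intros [x [<- H]]; simpl.
    replace (fst x + u - u, snd x + v - v) with x; auto.
    destruct x; simpl; f_equal; lia.
  - intros H; exists (fst c - u, snd c - v); split; auto.
    destruct c; simpl; f_equal; lia.
Qed.

Lemma in_rot P c : In c (rot90 P) <-> In (snd c, - fst c) P.
Proof.
  unfold rot90; rewrite in_map_iff; split.
  - intros [x [<- H]]; simpl.
    replace (fst x, - - snd x) with x; auto.
    destruct x; simpl; f_equal; lia.
  - intros H; exists (snd c, - fst c); split; auto.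
    destruct c; simpl; f_equal; lia.
Qed.

Lemma In_SV n c : In c (SV n) <-> fst c = 1 /\ 1 <= snd c <= Z.of_nat n.
Proof.
  unfold SV; rewrite in_map_iff; split.
  - intros [j [<- H]]; apply in_seq in H; simpl; lia.
  - intros H; exists (Z.to_nat (snd c)); split.
    + destruct c; simpl in *; f_equal; lia.
    + apply in_seq; lia.
Qed.

Lemma In_SH n c : In c (SH n) <-> snd c = 1 /\ 1 <= fst c <= Z.of_nat n.
Proof.
  unfold SH; rewrite in_map_iff; split.
  - intros [j [<- H]]; apply in_seq in H; simpl; lia.
  - intros H; exists (Z.to_nat (fst c)); split.
    + destruct c; simpl in *; f_equal; lia.
    + apply in_seq; lia.
Qed.

Lemma len_shift P u v : length (Defs.shift P u v) = length P.
Proof. unfold Defs.shift; apply length_map. Qed.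
Lemma len_rot P : length (rot90 P) = length P.
Proof. unfold rot90; apply length_map. Qed.
Lemma len_iter k P : length (Nat.iter k rot90 P) = length P.
Proof. induction k; simpl; auto. rewrite len_rot; auto. Qed.
Lemma len_SV n : length (SV n) = n.
Proof. unfold SV; rewrite length_map, length_seq; auto. Qed.
Lemma len_SH n : length (SH n) = n.
Proof. unfold SH; rewrite length_map, length_seq; auto. Qed.

Lemma psize_SV n : psize (SV n) = n.
Proof.
  unfold psize; rewrite nodup_fixed_point. apply len_SV.
  unfold SV; apply Injective_map_NoDup. intros a b H; injection H; lia.
  apply seq_NoDup.
Qed.
Lemma psize_SH n : psize (SH n) = n.
Proof.
  unfold psize; rewrite nodup_fixed_point. apply len_SH.
  unfold SH; apply Injective_map_NoDup. intros a b H; injection H; lia.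
  apply seq_NoDup.
Qed.

Definition isCol (n : nat) (R : polyomino) (a : Z) : Prop :=
  1 <= a <= Z.of_nat n /\ forall c, In c R <-> fst c = a /\ 1 <= snd c <= Z.of_nat n.
Definition isRow (n : nat) (R : polyomino) (b : Z) : Prop :=
  1 <= b <= Z.of_nat n /\ forall c, In c R <-> snd c = b /\ 1 <= fst c <= Z.of_nat n.

Definition colR (n : nat) (R : polyomino) (a lo : Z) : Prop :=
  forall c, In c R <-> fst c = a /\ lo <= snd c <= lo + Z.of_nat n - 1.
Definition rowR (n : nat) (R : polyomino) (b lo : Z) : Prop :=
  forall c, In c R <-> snd c = b /\ lo <= fst c <= lo + Z.of_nat n - 1.

Lemma colR_isCol n R a lo : (1 <= n)%nat -> colR n R a lo -> contained n R -> isCol n R a.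
Proof.
  intros Hn H Hc.
  assert (H1 : in_board n (a, lo)) by (apply Hc, H; simpl; lia).
  assert (H2 : in_board n (a, lo + Z.of_nat n - 1)) by (apply Hc, H; simpl; lia).
  unfold in_board in *; simpl in *.
  split; [lia|]. intro c; rewrite (H c); split; intro; lia.
Qed.
Lemma rowR_isRow n R b lo : (1 <= n)%nat -> rowR n R b lo -> contained n R -> isRow n R b.
Proof.
  intros Hn H Hc.
  assert (H1 : in_board n (lo, b)) by (apply Hc, H; simpl; lia).
  assert (H2 : in_board n (lo + Z.of_nat n - 1, b)) by (apply Hc, H; simpl; lia).
  unfold in_board in *; simpl in *.
  split; [lia|]. intro c; rewrite (H c); split; intro; lia.
Qed.

Lemma isCol_contained n R a : isCol n R a -> contained n R.
Proof. intros [Ha H] c Hc; apply H in Hc; unfold in_board; lia. Qed.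
Lemma isRow_contained n R a : isRow n R a -> contained n R.
Proof. intros [Ha H] c Hc; apply H in Hc; unfold in_board; lia. Qed.

Definition classified n R := (exists a, isCol n R a) \/ (exists b, isRow n R b).

Lemma class_free_SV n Q : (1 <= n)%nat -> free_copy (SV n) Q -> contained n Q -> classified n Q.
Proof.
  intros Hn [k [Hk [u [v ->]]]] Hc.
  destruct k as [|[|[|[|k]]]]; try lia; unfold Nat.iter in *; cbn [nat_rect] in *.
  - left; exists (u+1); apply colR_isCol with (v+1); auto.
    intro c; rewrite in_shift, In_SV; cbn [fst snd]; split; intro; lia.
  - right; exists (v+1); apply rowR_isRow with (u - Z.of_nat n); auto.
    intro c; rewrite in_shift, !in_rot, In_SV; cbn [fst snd]; split; intro; lia.
  - left; exists (u-1); apply colR_isCol with (v - Z.of_nat n); auto.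
    intro c; rewrite in_shift, !in_rot, In_SV; cbn [fst snd]; split; intro; lia.
  - right; exists (v-1); apply rowR_isRow with (u + 1); auto.
    intro c; rewrite in_shift, !in_rot, In_SV; cbn [fst snd]; split; intro; lia.
Qed.

Lemma class_free_SH n Q : (1 <= n)%nat -> free_copy (SH n) Q -> contained n Q -> classified n Q.
Proof.
  intros Hn [k [Hk [u [v ->]]]] Hc.
  destruct k as [|[|[|[|k]]]]; try lia; unfold Nat.iter in *; cbn [nat_rect] in *.
  - right; exists (v+1); apply rowR_isRow with (u+1); auto.
    intro c; rewrite in_shift, In_SH; cbn [fst snd]; split; intro; lia.
  - left; exists (u-1); apply colR_isCol with (v+1); auto.
    intro c; rewrite in_shift, !in_rot, In_SH; cbn [fst snd]; split; intro; lia.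
  - right; exists (v-1); apply rowR_isRow with (u - Z.of_nat n); auto.
    intro c; rewrite in_shift, !in_rot, In_SH; cbn [fst snd]; split; intro; lia.
  - left; exists (u+1); apply colR_isCol with (v - Z.of_nat n); auto.
    intro c; rewrite in_shift, !in_rot, In_SH; cbn [fst snd]; split; intro; lia.
Qed.

Lemma class_fixed_SV n Q : (1 <= n)%nat -> fixed_copy (SV n) Q -> contained n Q -> exists a, isCol n Q a.
Proof.
  intros Hn [u [v ->]] Hc.
  exists (u+1); apply colR_isCol with (v+1); auto.
  intro c; rewrite in_shift, In_SV; cbn [fst snd]; split; intro; lia.
Qed.
Lemma class_fixed_SH n Q : (1 <= n)%nat -> fixed_copy (SH n) Q -> contained n Q -> exists b, isRow n Q b.
Proof.
  intros Hn [u [v ->]] Hc.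
  exists (v+1); apply rowR_isRow with (u+1); auto.
  intro c; rewrite in_shift, In_SH; cbn [fst snd]; split; intro; lia.
Qed.

Lemma len_free_SV n Q : free_copy (SV n) Q -> length Q = n.
Proof. intros [k [_ [u [v ->]]]]; rewrite len_shift, len_iter; apply len_SV. Qed.
Lemma len_free_SH n Q : free_copy (SH n) Q -> length Q = n.
Proof. intros [k [_ [u [v ->]]]]; rewrite len_shift, len_iter; apply len_SH. Qed.
Lemma len_fixed_SV n Q : fixed_copy (SV n) Q -> length Q = n.
Proof. intros [u [v ->]]; rewrite len_shift; apply len_SV. Qed.
Lemma len_fixed_SH n Q : fixed_copy (SH n) Q -> length Q = n.
Proof. intros [u [v ->]]; rewrite len_shift; apply len_SH. Qed.

Lemma FOP_in L R1 R2 : ForallOrdPairs disjoint L -> In R1 L -> In R2 L ->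
  R1 = R2 \/ disjoint R1 R2.
Proof.
  induction 1 as [|a l Ha Hl IH]; simpl; [tauto|].
  rewrite Forall_forall in Ha.
  intros [<-|H1] [<-|H2]; auto.
  all: right; intros c X Y; first [exact (Ha _ H1 c Y X) | exact (Ha _ H2 c X Y)].
Qed.

Definition K (L : list polyomino) (Q : polyomino) : Prop :=
  (forall R, In R L -> disjoint Q R) -> exists R, In R L /\ same_set Q R.

Lemma K_of_packing Cp P L Q : packing Cp P L -> Cp P Q -> contained (psize P) Q -> K L Q.
Proof.
  intros [Hc [Hv Hm]] HQ Hcont Hall.
  apply NNPP; intro Hno. apply (Hm Q HQ).
  - intros R HR Hs; apply Hno; eauto.
  - destruct Hv as [Hv1 Hv2]; split; constructor; auto.
    apply Forall_forall; auto.
Qed.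

Lemma not_all_disj L Q : ~ (forall R, In R L -> disjoint Q R) ->
  exists R c, In R L /\ In c Q /\ In c R.
Proof.
  intro H. apply not_all_ex_not in H as [R H].
  apply imply_to_and in H as [HR H].
  unfold disjoint in H. apply not_all_ex_not in H as [c H].
  apply imply_to_and in H as [Hc H]. apply NNPP in H. eauto.
Qed.

Lemma cover_free n L x y :
  ForallOrdPairs disjoint L ->
  (forall R, In R L -> classified n R) ->
  (exists Q, isCol n Q x /\ K L Q) ->
  (exists Q, isRow n Q y /\ K L Q) ->
  1 <= x <= Z.of_nat n -> 1 <= y <= Z.of_nat n ->
  exists R, In R L /\ In (x, y) R.
Proof.
  intros Hd Hcl [Q [HQ KQ]] [Q' [HQ' KQ']] Hx Hy.
  apply NNPP; intro Hnc.
  destruct (classic (forall R, In R L -> disjoint Q R)) as [Hall|Hn].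
  { destruct (KQ Hall) as [R [HR Hs]]. apply Hnc; exists R; split; auto.
    apply Hs, HQ; simpl; lia. }
  destruct (classic (forall R, In R L -> disjoint Q' R)) as [Hall|Hn'].
  { destruct (KQ' Hall) as [R [HR Hs]]. apply Hnc; exists R; split; auto.
    apply Hs, HQ'; simpl; lia. }
  apply not_all_disj in Hn as [R1 [c1 [HR1 [Hc1Q Hc1R]]]].
  apply not_all_disj in Hn' as [R2 [c2 [HR2 [Hc2Q Hc2R]]]].
  apply HQ in Hc1Q. apply HQ' in Hc2Q.
  destruct (Hcl R1 HR1) as [[a [Ha HRa]]|[b [Hb HRb]]].
  { apply HRa in Hc1R. apply Hnc; exists R1; split; auto; apply HRa; simpl; lia. }
  destruct (Hcl R2 HR2) as [[a [Ha HRa']]|[b' [Hb' HRb']]].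
  2: { apply HRb' in Hc2R. apply Hnc; exists R2; split; auto; apply HRb'; simpl; lia. }
  apply HRb in Hc1R. apply HRa' in Hc2R.
  assert (X1 : In (a, b) R1) by (apply HRb; simpl; lia).
  assert (X2 : In (a, b) R2) by (apply HRa'; simpl; lia).
  destruct (FOP_in L R1 R2 Hd HR1 HR2) as [<-|Hdis].
  - assert (X3 : In (x, b) R1) by (apply HRb; simpl; lia).
    apply HRa' in X3; simpl in X3.
    apply Hnc; exists R1; split; auto; apply HRa'; simpl; lia.
  - exact (Hdis _ X1 X2).
Qed.

Lemma cover_col n L x y :
  (forall R, In R L -> exists a, isCol n R a) ->
  (exists Q, isCol n Q x /\ K L Q) ->
  1 <= x <= Z.of_nat n -> 1 <= y <= Z.of_nat n ->
  exists R, In R L /\ In (x, y) R.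
Proof.
  intros Hcl [Q [HQ KQ]] Hx Hy.
  apply NNPP; intro Hnc.
  destruct (classic (forall R, In R L -> disjoint Q R)) as [Hall|Hn].
  { destruct (KQ Hall) as [R [HR Hs]]. apply Hnc; exists R; split; auto.
    apply Hs, HQ; simpl; lia. }
  apply not_all_disj in Hn as [R1 [c1 [HR1 [Hc1Q Hc1R]]]].
  apply HQ in Hc1Q.
  destruct (Hcl R1 HR1) as [a [Ha HRa]].
  apply HRa in Hc1R. apply Hnc; exists R1; split; auto; apply HRa; simpl; lia.
Qed.

Lemma cover_row n L x y :
  (forall R, In R L -> exists b, isRow n R b) ->
  (exists Q, isRow n Q y /\ K L Q) ->
  1 <= x <= Z.of_nat n -> 1 <= y <= Z.of_nat n ->
  exists R, In R L /\ In (x, y) R.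
Proof.
  intros Hcl [Q [HQ KQ]] Hx Hy.
  apply NNPP; intro Hnc.
  destruct (classic (forall R, In R L -> disjoint Q R)) as [Hall|Hn].
  { destruct (KQ Hall) as [R [HR Hs]]. apply Hnc; exists R; split; auto.
    apply Hs, HQ; simpl; lia. }
  apply not_all_disj in Hn as [R1 [c1 [HR1 [Hc1Q Hc1R]]]].
  apply HQ in Hc1Q.
  destruct (Hcl R1 HR1) as [a [Ha HRa]].
  apply HRa in Hc1R. apply Hnc; exists R1; split; auto; apply HRa; simpl; lia.
Qed.

Lemma NoDup_prod {A B : Type} (l : list A) (l' : list B) :
  NoDup l -> NoDup l' -> NoDup (list_prod l l').
Proof.
  induction 1 as [|a l Ha Hl IH]; intros H'; simpl; [constructor|].
  apply NoDup_app; auto.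
  - apply Injective_map_NoDup; auto. intros p q E; injection E; auto.
  - intros [p q] X Y. apply in_map_iff in X as [z [E _]]. injection E as E1 E2; subst.
    apply in_prod_iff in Y as [Y _]; auto.
Qed.

Lemma len_concat (n : nat) (L : list polyomino) :
  (forall R, In R L -> length R = n) -> length (concat L) = (n * length L)%nat.
Proof.
  induction L as [|R L IH]; intros H; simpl; [lia|].
  rewrite length_app, H, IH; auto with datatypes; lia.
Qed.

Lemma lower n (L : list polyomino) : (1 <= n)%nat ->
  (forall R, In R L -> length R = n) ->
  (forall x y, 1 <= x <= Z.of_nat n -> 1 <= y <= Z.of_nat n -> exists R, In R L /\ In (x, y) R) ->
  (n <= length L)%nat.
Proof.
  intros Hn Hl Hc.
  set (s := map Z.of_nat (seq 1 n)).
  assert (Hs : NoDup s).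
  { apply Injective_map_NoDup; [intros a b; lia| apply seq_NoDup]. }
  assert (Hin : forall z, In z s -> 1 <= z <= Z.of_nat n).
  { intros z Hz; apply in_map_iff in Hz as [j [<- Hj]]; apply in_seq in Hj; lia. }
  assert (H := NoDup_incl_length (l := list_prod s s) (l' := concat L) (NoDup_prod _ _ Hs Hs)).
  rewrite length_prod, len_concat with (n := n) in H by auto.
  unfold s in H; rewrite length_map, length_seq in H.
  assert (n * n <= n * length L)%nat.
  { apply H. intros [x y] Hxy. apply in_prod_iff in Hxy as [Hx Hy].
    apply Hin in Hx; apply Hin in Hy.
    destruct (Hc x y Hx Hy) as [R [HR HxyR]]. apply in_concat; eauto. }
  nia.
Qed.

Lemma FOP_map (f : nat -> polyomino) s : NoDup s ->
  (forall i j, In i s -> In j s -> i <> j -> disjoint (f i) (f j)) ->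
  ForallOrdPairs disjoint (map f s).
Proof.
  induction 1 as [|a s Ha Hs IH]; intros H; simpl; constructor.
  - apply Forall_forall; intros R HR; apply in_map_iff in HR as [j [<- Hj]].
    apply H; simpl; auto. intros ->; contradiction.
  - apply IH; intros; apply H; simpl; auto.
Qed.

Lemma upper_col Cp P n (g : Z -> polyomino) : psize P = n -> (1 <= n)%nat ->
  (forall a, 1 <= a <= Z.of_nat n -> Cp P (g a)) ->
  (forall a, 1 <= a <= Z.of_nat n -> isCol n (g a) a) ->
  (forall Q, Cp P Q -> contained n Q -> classified n Q) ->
  packing Cp P (map (fun i => g (Z.of_nat i)) (seq 1 n)).
Proof.
  intros Hp Hn Hg Hgc Hcl. unfold packing, valid; rewrite Hp.
  assert (Hm : forall R, In R (map (fun i => g (Z.of_nat i)) (seq 1 n)) ->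
     exists a, 1 <= a <= Z.of_nat n /\ R = g a).
  { intros R HR; apply in_map_iff in HR as [i [<- Hi]]; apply in_seq in Hi.
    exists (Z.of_nat i); split; auto; lia. }
  assert (Hm2 : forall a, 1 <= a <= Z.of_nat n -> In (g a) (map (fun i => g (Z.of_nat i)) (seq 1 n))).
  { intros a Ha; apply in_map_iff; exists (Z.to_nat a); split.
    rewrite Z2Nat.id by lia; auto. apply in_seq; lia. }
  split; [|split; [split|]].
  - apply Forall_forall; intros R HR; destruct (Hm R HR) as [a [Ha ->]]; auto.
  - apply Forall_forall; intros R HR; destruct (Hm R HR) as [a [Ha ->]].
    eapply isCol_contained; eauto.
  - apply FOP_map; [apply seq_NoDup|]. intros i j Hi Hj Hij c X Y.
    apply in_seq in Hi; apply in_seq in Hj.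
    apply (Hgc (Z.of_nat i)) in X; [|lia]. apply (Hgc (Z.of_nat j)) in Y; [|lia]. lia.
  - intros Q HQ Hns [Hc Hd].
    inversion Hc; subst. inversion Hd; subst.
    rewrite Forall_forall in *.
    destruct (Hcl Q HQ ltac:(auto)) as [[a [Ha HQa]]|[b [Hb HQb]]].
    + apply (Hns (g a) (Hm2 a Ha)). intro c. rewrite HQa. destruct (Hgc a Ha) as [_ E].
      rewrite E. tauto.
    + assert (X : In (1, b) Q) by (apply HQb; simpl; lia).
      assert (Y : In (1, b) (g 1)) by (apply (Hgc 1); simpl; lia).
      exact (H3 (g 1) (Hm2 1 ltac:(lia)) _ X Y).
Qed.

Lemma upper_row Cp P n (g : Z -> polyomino) : psize P = n -> (1 <= n)%nat ->
  (forall a, 1 <= a <= Z.of_nat n -> Cp P (g a)) ->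
  (forall a, 1 <= a <= Z.of_nat n -> isRow n (g a) a) ->
  (forall Q, Cp P Q -> contained n Q -> classified n Q) ->
  packing Cp P (map (fun i => g (Z.of_nat i)) (seq 1 n)).
Proof.
  intros Hp Hn Hg Hgc Hcl. unfold packing, valid; rewrite Hp.
  assert (Hm : forall R, In R (map (fun i => g (Z.of_nat i)) (seq 1 n)) ->
     exists a, 1 <= a <= Z.of_nat n /\ R = g a).
  { intros R HR; apply in_map_iff in HR as [i [<- Hi]]; apply in_seq in Hi.
    exists (Z.of_nat i); split; auto; lia. }
  assert (Hm2 : forall a, 1 <= a <= Z.of_nat n -> In (g a) (map (fun i => g (Z.of_nat i)) (seq 1 n))).
  { intros a Ha; apply in_map_iff; exists (Z.to_nat a); split.
    rewrite Z2Nat.id by lia; auto. apply in_seq; lia. }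
  split; [|split; [split|]].
  - apply Forall_forall; intros R HR; destruct (Hm R HR) as [a [Ha ->]]; auto.
  - apply Forall_forall; intros R HR; destruct (Hm R HR) as [a [Ha ->]].
    eapply isRow_contained; eauto.
  - apply FOP_map; [apply seq_NoDup|]. intros i j Hi Hj Hij c X Y.
    apply in_seq in Hi; apply in_seq in Hj.
    apply (Hgc (Z.of_nat i)) in X; [|lia]. apply (Hgc (Z.of_nat j)) in Y; [|lia]. lia.
  - intros Q HQ Hns [Hc Hd].
    inversion Hc; subst. inversion Hd; subst.
    rewrite Forall_forall in *.
    destruct (Hcl Q HQ ltac:(auto)) as [[b [Hb HQb]]|[a [Ha HQa]]].
    + assert (X : In (b, 1) Q) by (apply HQb; simpl; lia).
      assert (Y : In (b, 1) (g 1)) by (apply (Hgc 1); simpl; lia).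
      exact (H3 (g 1) (Hm2 1 ltac:(lia)) _ X Y).
    + apply (Hns (g a) (Hm2 a Ha)). intro c. rewrite HQa. destruct (Hgc a Ha) as [_ E].
      rewrite E. tauto.
Qed.

Definition colSV n a := Defs.shift (SV n) (a - 1) 0.
Definition rowSV n b := Defs.shift (rot90 (SV n)) (Z.of_nat n + 1) (b - 1).
Definition rowSH n b := Defs.shift (SH n) 0 (b - 1).
Definition colSH n a := Defs.shift (rot90 (SH n)) (a + 1) 0.

Lemma colSV_ok n a : 1 <= a <= Z.of_nat n -> isCol n (colSV n a) a.
Proof. intros Ha; split; auto; intro c; unfold colSV; rewrite in_shift, In_SV; cbn [fst snd]; split; intro; lia. Qed.
Lemma rowSV_ok n a : 1 <= a <= Z.of_nat n -> isRow n (rowSV n a) a.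
Proof. intros Ha; split; auto; intro c; unfold rowSV; rewrite in_shift, in_rot, In_SV; cbn [fst snd]; split; intro; lia. Qed.
Lemma rowSH_ok n a : 1 <= a <= Z.of_nat n -> isRow n (rowSH n a) a.
Proof. intros Ha; split; auto; intro c; unfold rowSH; rewrite in_shift, In_SH; cbn [fst snd]; split; intro; lia. Qed.
Lemma colSH_ok n a : 1 <= a <= Z.of_nat n -> isCol n (colSH n a) a.
Proof. intros Ha; split; auto; intro c; unfold colSH; rewrite in_shift, in_rot, In_SH; cbn [fst snd]; split; intro; lia. Qed.

Lemma colSV_free n a : free_copy (SV n) (colSV n a).
Proof. exists 0%nat; split; [lia|]; exists (a-1), 0; reflexivity. Qed.
Lemma colSV_fixed n a : fixed_copy (SV n) (colSV n a).
Proof. exists (a-1), 0; reflexivity. Qed.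
Lemma rowSV_free n a : free_copy (SV n) (rowSV n a).
Proof. exists 1%nat; split; [lia|]; exists (Z.of_nat n + 1), (a-1); reflexivity. Qed.
Lemma rowSH_free n a : free_copy (SH n) (rowSH n a).
Proof. exists 0%nat; split; [lia|]; exists 0, (a-1); reflexivity. Qed.
Lemma rowSH_fixed n a : fixed_copy (SH n) (rowSH n a).
Proof. exists 0, (a-1); reflexivity. Qed.
Lemma colSH_free n a : free_copy (SH n) (colSH n a).
Proof. exists 1%nat; split; [lia|]; exists (a+1), 0; reflexivity. Qed.

Theorem theorem1 (n : nat) (Hn : (1 <= n)%nat) :
  cp_free_is (SV n) n /\ cp_free_is (SH n) n /\
  cp_fixed_is (SV n) n /\ cp_fixed_is (SH n) n.
Proof.
  split; [|split; [|split]].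
  - split.
    + eexists; split.
      * apply (upper_col free_copy (SV n) n (colSV n)); auto using psize_SV, colSV_free, colSV_ok.
        intros; apply class_free_SV; auto.
      * rewrite length_map, length_seq; auto.
    + intros k [L [HP <-]]. apply lower; auto.
      * intros R HR. destruct HP as [HF _]. rewrite Forall_forall in HF.
        apply len_free_SV; auto.
      * intros x y Hx Hy. pose proof HP as [HF [[Hc Hd] Hm]].
        rewrite Forall_forall in HF, Hc.
        apply cover_free with (n := n); auto.
        -- intros R HR; apply class_free_SV; auto. rewrite psize_SV in Hc; auto.
        -- exists (colSV n x); split; [apply colSV_ok; auto|].
           apply (K_of_packing _ _ _ _ HP); [apply colSV_free|].
           rewrite psize_SV; eapply isCol_contained; apply colSV_ok; auto.
        -- exists (rowSV n y); split; [apply rowSV_ok; auto|].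
           apply (K_of_packing _ _ _ _ HP); [apply rowSV_free|].
           rewrite psize_SV; eapply isRow_contained; apply rowSV_ok; auto.
  - split.
    + eexists; split.
      * apply (upper_row free_copy (SH n) n (rowSH n)); auto using psize_SH, rowSH_free, rowSH_ok.
        intros; apply class_free_SH; auto.
      * rewrite length_map, length_seq; auto.
    + intros k [L [HP <-]]. apply lower; auto.
      * intros R HR. destruct HP as [HF _]. rewrite Forall_forall in HF.
        apply len_free_SH; auto.
      * intros x y Hx Hy. pose proof HP as [HF [[Hc Hd] Hm]].
        rewrite Forall_forall in HF, Hc.
        apply cover_free with (n := n); auto.
        -- intros R HR; apply class_free_SH; auto. rewrite psize_SH in Hc; auto.
        -- exists (colSH n x); split; [apply colSH_ok; auto|].
           apply (K_of_packing _ _ _ _ HP); [apply colSH_free|].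
           rewrite psize_SH; eapply isCol_contained; apply colSH_ok; auto.
        -- exists (rowSH n y); split; [apply rowSH_ok; auto|].
           apply (K_of_packing _ _ _ _ HP); [apply rowSH_free|].
           rewrite psize_SH; eapply isRow_contained; apply rowSH_ok; auto.
  - split.
    + eexists; split.
      * apply (upper_col fixed_copy (SV n) n (colSV n)); auto using psize_SV, colSV_fixed, colSV_ok.
        intros Q HQ HQc; left; apply class_fixed_SV; auto.
      * rewrite length_map, length_seq; auto.
    + intros k [L [HP <-]]. apply lower; auto.
      * intros R HR. destruct HP as [HF _]. rewrite Forall_forall in HF.
        apply len_fixed_SV; auto.
      * intros x y Hx Hy. pose proof HP as [HF [[Hc Hd] Hm]].
        rewrite Forall_forall in HF, Hc.
        apply cover_col with (n := n); auto.
        -- intros R HR; apply class_fixed_SV; auto. rewrite psize_SV in Hc; auto.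
        -- exists (colSV n x); split; [apply colSV_ok; auto|].
           apply (K_of_packing _ _ _ _ HP); [apply colSV_fixed|].
           rewrite psize_SV; eapply isCol_contained; apply colSV_ok; auto.
  - split.
    + eexists; split.
      * apply (upper_row fixed_copy (SH n) n (rowSH n)); auto using psize_SH, rowSH_fixed, rowSH_ok.
        intros Q HQ HQc; right; apply class_fixed_SH; auto.
      * rewrite length_map, length_seq; auto.
    + intros k [L [HP <-]]. apply lower; auto.
      * intros R HR. destruct HP as [HF _]. rewrite Forall_forall in HF.
        apply len_fixed_SH; auto.
      * intros x y Hx Hy. pose proof HP as [HF [[Hc Hd] Hm]].
        rewrite Forall_forall in HF, Hc.
        apply cover_row with (n := n); auto.
        -- intros R HR; apply class_fixed_SH; auto. rewrite psize_SH in Hc; auto.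
        -- exists (rowSH n y); split; [apply rowSH_ok; auto|].
           apply (K_of_packing _ _ _ _ HP); [apply rowSH_fixed|].
           rewrite psize_SH; eapply isRow_contained; apply rowSH_ok; auto.
Qed.
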